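(* Let $\bm{T} = \{T^1,\ldots,T^M\}$ be an ensemble of $M$ decision trees over an input space $\mathcal{X}$, with $L^m$ the set of leaves of tree $T^m$ and $\nu^m_j$ the value of leaf $l^m_j$, and let $\mathcal{C}:\mathcal{X}\to\{\mathrm{true},\mathrm{false}\}$ be a constraint such that $\mathcal{C}(\bm{x})$ holds for at least one $\bm{x}\in\mathcal{X}$. Consider the search space $S$ whose initial state is $[\,]$ and in which a state $s=[l^1_{i_1},\ldots,l^m_{i_m}]$ at depth $m<M$ has children $$C(s) = \{[l^1_{i_1},\ldots,l^m_{i_m}, l^{m+1}] \mid l^{m+1} \in L^{m+1},\ \mathrm{box}(l^1_{i_1},\ldots,l^m_{i_m},l^{m+1}) \neq \emptyset\},$$ and where only states $s$ accepted by $\mathcal{C}_s$ are retained, with $\mathcal{C}_s(s)=\mathrm{true}$ iff there exists $\bm{x}\in\mathrm{box}(s)$ with $\mathcal{C}(\bm{x})$. For $s=[l^1_{i_1},\ldots,l^m_{i_m}]$ define $$g(s)=\sum_{m'=1}^m \nu^{m'}_{i_{m'}},\qquad h(s)=\sum_{m'=m+1}^M h_{m'}(s),\qquad h_{m'}(s)=\max\{\nu^{m'}_j \mid l^{m'}_j\in L^{m'},\ \mathrm{box}(l^1_{i_1},\ldots,l^m_{i_m},l^{m'}_j)\neq\emptyset\},$$ and $f(s)=g(s)+h(s)$. Run best-first (A* ) search: maintain an OPEN list initialized to $\{[\,]\}$; repeatedly remove a state of maximal $f$-value from OPEN; if it has depth $M$, return it; otherwise add all its children in $C(s)$ that are accepted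 by $\mathcal{C}_s$ to OPEN. Then the search returns a state $s^*$ at depth $M$ which is an output configuration (a max-clique in $\bm{G}$) with $g(s^* ) = \max_{\bm{x}\in\mathcal{X},\ \mathcal{C}(\bm{x})} \bm{T}(\bm{x})$, i.e. it solves the optimization problem $\max_{\bm{x}\in\mathcal{X}} \bm{T}(\bm{x})$ subject to $\mathcal{C}(\bm{x})$.
   Context: Each tree $T^m$ is a binary tree whose internal nodes carry axis-aligned split conditions on the features of an input $\bm{x}\in\mathcal{X}$, and whose leaves carry real values. An input is evaluated by a tree by following split conditions from the root to a unique leaf; the ensemble output $\bm{T}(\bm{x})$ is the sum over trees of the values of the leaves reached by $\bm{x}$. For a leaf $l$, $\mathrm{box}(l)\subseteq\mathcal{X}$ is the set of inputs reaching $l$ (an axis-aligned box); for a collection of leaves (or a search state, viewed as its set of leaves), $\mathrm{box}$ is the intersection of the individual boxes, and $\mathrm{box}([\,])=\mathcal{X}$. An output configuration is a set of $M$ leaves, one per tree, whose boxes have nonempty common intersection. The graph $\bm{G}$ has all leaves as vertices with an edge between leaves of different trees whose boxes intersect; output configurations are exactly the max-cliques of $\bm{G}$ containing one leaf of each tree. For a state at depth $M$, $h=0$. *)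

(* Defs.v *)
From mathcomp Require Import all_boot all_order all_algebra.
From mathcomp Require Import boolp reals.
Set Implicit Arguments. Unset Strict Implicit. Unset Printing Implicit Defensive.
Import Order.TTheory GRing.Theory Num.Theory.
Local Open Scope ring_scope.

Section TreeEnsembles.
Variables (R : realType) (d : nat).

Definition input := 'I_d -> R.

(* A binary decision tree: internal nodes carry the axis-aligned split
   condition  x_i <= theta  (true -> left subtree, false -> right subtree),
   leaves carry real values. *)
Inductive dtree : Type :=
| DLeaf of R
| DNode of 'I_d & R & dtree & dtree.

(* A leaf is identified by its path from the root (false = left, true = right). *)
Definition leaf := seq bool.

Fixpoint leaves (t : dtree) : seq leaf :=
  match t with
  | DLeaf _ => [:: [::]]
  | DNode _ _ l r => map (cons false) (leaves l) ++ map (cons true) (leaves r)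
  end.

Fixpoint reach (t : dtree) (x : input) : leaf :=
  match t with
  | DLeaf _ => [::]
  | DNode i th l r => if x i <= th then false :: reach l x else true :: reach r x
  end.

Fixpoint leaf_val (t : dtree) (p : leaf) : R :=
  match t, p with
  | DLeaf v, _ => v
  | DNode _ _ l r, b :: p' => leaf_val (if b then r else l) p'
  | DNode _ _ _ _, [::] => 0
  end.

Definition box (t : dtree) (p : leaf) (x : input) : Prop := reach t x = p.

Definition tree_eval (t : dtree) (x : input) : R := leaf_val t (reach t x).

(* ---- Ensembles: E = [T^1; ...; T^M], M = size E (0-based indices). ---- *)
Definition tree_at (E : seq dtree) (m : nat) : dtree := nth (DLeaf 0) E m.

Definition ens_eval (E : seq dtree) (x : input) : R := \sum_(t <- E) tree_eval t x.

(* A search state [l^1; ...; l^m]: the i-th entry is a leaf of tree i. *)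
Definition state := seq leaf.

Definition in_box (E : seq dtree) (s : state) (x : input) : Prop :=
  forall i, (i < size s)%N -> box (tree_at E i) (nth [::] s i) x.

Definition box_nonempty (E : seq dtree) (s : state) : Prop := exists x, in_box E s x.

Definition output_config (E : seq dtree) (s : state) : Prop :=
  size s = size E /\
  (forall i, (i < size s)%N -> nth [::] s i \in leaves (tree_at E i)) /\
  box_nonempty E s.

Definition g (E : seq dtree) (s : state) : R :=
  \sum_(i < size s) leaf_val (tree_at E i) (nth [::] s i).

(* maximum of a list of reals (value on the empty list is irrelevant: it is
   never used on states of the search, whose boxes are nonempty). *)
Definition maxs (vs : seq R) : R :=
  match vs with [::] => 0 | v :: vs' => foldr Num.max v vs' end.

Definition h_tree (E : seq dtree) (s : state) (m' : nat) : R :=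
  maxs [seq leaf_val (tree_at E m') l | l <- leaves (tree_at E m') &
          `[< exists x, in_box E s x /\ box (tree_at E m') l x >] ].

Definition h (E : seq dtree) (s : state) : R :=
  \sum_(size s <= m' < size E) h_tree E s m'.

Definition f (E : seq dtree) (s : state) : R := g E s + h E s.

Definition children (E : seq dtree) (s : state) : seq state :=
  [seq rcons s l | l <- leaves (tree_at E (size s)) & `[< box_nonempty E (rcons s l) >] ].

Definition accepted (E : seq dtree) (C : input -> bool) (s : state) : Prop :=
  exists x, in_box E s x /\ C x.

Inductive config : Type :=
| Running of seq state   (* current OPEN list *)
| Done of state.

Inductive astar_step (E : seq dtree) (C : input -> bool) : config -> config -> Prop :=
| step_return (open : seq state) (s : state) :
    s \in open -> (forall s', s' \in open -> f E s' <= f E s) ->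
    size s = size E ->
    astar_step E C (Running open) (Done s)
| step_expand (open : seq state) (s : state) :
    s \in open -> (forall s', s' \in open -> f E s' <= f E s) ->
    (size s < size E)%N ->
    astar_step E C (Running open)
      (Running (rem s open ++ [seq c <- children E s | `[< accepted E C c >] ])).

(* Every execution (for every choice among states of maximal f) terminates,
   never gets stuck, and ends by returning a state satisfying P. *)
Inductive always_returns (E : seq dtree) (C : input -> bool) (P : state -> Prop)
  : config -> Prop :=
| ar_done (s : state) : P s -> always_returns E C P (Done s)
| ar_run (open : seq state) :
    (exists c, astar_step E C (Running open) c) ->
    (forall c, astar_step E C (Running open) c -> always_returns E C P c) ->
    always_returns E C P (Running open).

End TreeEnsembles.

(* Main.v *)
Require Import Defs.
From mathcomp Require Import all_boot all_order all_algebra.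
From mathcomp Require Import boolp reals.
Import Order.TTheory GRing.Theory Num.Theory.
Local Open Scope ring_scope.
Set Implicit Arguments. Unset Strict Implicit.

Lemma reach_leaves (R : realType) (d : nat) (t : dtree R d) (x : input R d) :
  reach t x \in leaves t.
Proof.
elim: t => [v|i th l IHl r IHr] /=; first by rewrite inE.
have ci : forall b : bool, injective (cons b : leaf -> leaf) by move=> b a c [].
by case: ifP => _; rewrite mem_cat !(mem_map (ci _)) ?IHl ?IHr ?orbT.
Qed.

Lemma maxs_ge (R : realType) (vs : seq R) v : v \in vs -> v <= maxs vs.
Proof.
case: vs => [|v0 vs] //=.
have H : forall w, w \in v0 :: vs -> w <= foldr Num.max v0 vs.
  elim: vs => [|a r IH] w /=.
    by rewrite inE => /eqP ->.
  rewrite !inE le_max => /or3P [/eqP ->|/eqP ->|wr].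
  - by rewrite (IH v0) ?orbT // inE eqxx.
  - by rewrite lexx.
  - by rewrite (IH w) ?orbT // inE wr orbT.
exact: H.
Qed.

Lemma ens_split (R : realType) (d : nat) (E : seq (dtree R d)) (s : state) x :
  (size s <= size E)%N -> in_box E s x ->
  ens_eval E x = g E s + \sum_(size s <= i < size E) tree_eval (tree_at E i) x.
Proof.
move=> hs hb.
rewrite /ens_eval (big_nth (@DLeaf R d 0)) (@big_cat_nat _ _ _ (size s) 0 (size E)) //.
congr (_ + _).
rewrite /g big_mkord; apply: eq_bigr => i _.
by rewrite /tree_eval (hb i (ltn_ord i)).
Qed.

Lemma ens_le_f (R : realType) (d : nat) (E : seq (dtree R d)) (s : state) x :
  (size s <= size E)%N -> in_box E s x -> ens_eval E x <= f E s.
Proof.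
move=> hs hb; rewrite (ens_split hs hb) /f lerD2l /h.
apply: ler_sum => i _.
rewrite /h_tree /tree_eval; apply: maxs_ge.
apply: map_f; rewrite mem_filter reach_leaves andbT.
by apply/asboolP; exists x; split.
Qed.

Lemma argmax_seq (T : eqType) (R : realType) (F : T -> R) (l : seq T) :
  l != [::] -> exists2 s, s \in l & forall s', s' \in l -> F s' <= F s.
Proof.
elim: l => [|a l IH] // _.
case: (altP (l =P [::])) => [->|ne].
  by exists a; rewrite ?inE // => s'; rewrite inE => /eqP ->.
have [b bl bmax] := IH ne.
case: (leP (F a) (F b)) => hab.
  exists b; first by rewrite inE bl orbT.
  by move=> s'; rewrite inE => /orP [/eqP ->|/bmax].
exists a; first by rewrite inE eqxx.
move=> s'; rewrite inE => /orP [/eqP ->//|/bmax h]. 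
exact: le_trans h (ltW hab).
Qed.

Definition valid (R : realType) (d : nat) (E : seq (dtree R d)) (C : input R d -> bool) (s : state) :=
  (size s <= size E)%N /\
  (forall i, (i < size s)%N -> nth [::] s i \in leaves (tree_at E i)) /\
  accepted E C s.

Definition inv (R : realType) (d : nat) (E : seq (dtree R d)) (C : input R d -> bool) (open : seq state) :=
  (forall s, s \in open -> valid E C s) /\
  (forall x, C x -> exists2 s, s \in open & in_box E s x).

Definition B (R : realType) (d : nat) (E : seq (dtree R d)) : nat :=
  (\max_(i < size E) size (leaves (tree_at E i)))%N.+1.

Definition mu (R : realType) (d : nat) (E : seq (dtree R d)) (open : seq state) : nat :=
  (\sum_(s <- open) B E ^ (size E - size s))%N.

Lemma mem_children (R : realType) (d : nat) (E : seq (dtree R d)) (C : input R d -> bool) s c :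
  c \in [seq c <- children E s | `[< accepted E C c >] ] ->
  exists2 l, l \in leaves (tree_at E (size s)) & c = rcons s l /\ accepted E C c.
Proof.
rewrite mem_filter => /andP [/asboolP acc].
case/mapP => l; rewrite mem_filter => /andP [_ hl] hc; subst c.
by exists l.
Qed.

Lemma sum_le_const (T : eqType) (l : seq T) (F : T -> nat) K :
  (forall c, c \in l -> F c <= K)%N -> (\sum_(c <- l) F c <= size l * K)%N.
Proof.
elim: l => [|a l IH] hF; first by rewrite big_nil.
rewrite big_cons /= mulSn leq_add ?hF ?inE ?eqxx // IH // => c hc.
by rewrite hF // inE hc orbT.
Qed.

Lemma mu_dec (R : realType) (d : nat) (E : seq (dtree R d)) (C : input R d -> bool) s open :
  s \in open -> (size s < size E)%N ->
  (mu E (rem s open ++ [seq c <- children E s | `[< accepted E C c >] ]) < mu E open)%N.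
Proof.
move=> so hs.
rewrite {2}/mu (perm_big _ (perm_to_rem so)) big_cons /mu big_cat /= addnC ltn_add2r.
set P := (B E ^ (size E - (size s).+1))%N.
have eP : (B E ^ (size E - size s) = B E * P)%N.
  by rewrite /P -expnS subnSK.
have P0 : (0 < P)%N by rewrite expn_gt0.
apply: (@leq_ltn_trans (size [seq c <- children E s | `[< accepted E C c >] ] * P)).
  apply: sum_le_const => c /mem_children [l _ [-> _]].
  by rewrite size_rcons.
rewrite eP ltn_pmul2r //.
apply: (@leq_ltn_trans (size (leaves (tree_at E (size s))))).
  rewrite size_filter (leq_trans (count_size _ _)) // /children size_map size_filter.
  exact: count_size.
rewrite /B ltnS.
exact: (@leq_bigmax _ (fun i : 'I_(size E) => size (leaves (tree_at E i))) (Ordinal hs)).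
Qed.

Lemma in_box_rcons (R : realType) (d : nat) (E : seq (dtree R d)) s x :
  in_box E s x -> in_box E (rcons s (reach (tree_at E (size s)) x)) x.
Proof.
move=> hb i; rewrite size_rcons ltnS nth_rcons leq_eqVlt => /orP [/eqP ->|hi].
  by rewrite ltnn eqxx.
by rewrite hi; apply: hb.
Qed.

Lemma inv_step (R : realType) (d : nat) (E : seq (dtree R d)) (C : input R d -> bool) s open :
  inv E C open -> s \in open -> (size s < size E)%N ->
  inv E C (rem s open ++ [seq c <- children E s | `[< accepted E C c >] ]).
Proof.
move=> [H1 H2] so hs; split.
  move=> c; rewrite mem_cat => /orP [/mem_rem/H1 //|/mem_children [l hl [-> acc]]].
  have [_ [hv _]] := H1 s so.
  split; first by rewrite size_rcons.
  split=> // i; rewrite size_rcons ltnS nth_rcons leq_eqVlt => /orP [/eqP ->|hi].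
    by rewrite ltnn eqxx.
  by rewrite hi; apply: hv.
move=> x Cx; have [s' so' hb] := H2 x Cx.
case: (eqVneq s' s) => [e|ne]; last by exists s' => //; rewrite mem_cat rem_mem.
subst s'.
exists (rcons s (reach (tree_at E (size s)) x)); last exact: in_box_rcons.
rewrite mem_cat; apply/orP; right.
rewrite mem_filter; apply/andP; split.
  by apply/asboolP; exists x; split => //; apply: in_box_rcons.
apply: map_f; rewrite mem_filter reach_leaves andbT.
by apply/asboolP; exists x; apply: in_box_rcons.
Qed.

Lemma main_lemma (R : realType) (d : nat) (E : seq (dtree R d))
    (C : input R d -> bool) (hC : exists x, C x) n open :
  (mu E open < n)%N -> inv E C open ->
  always_returns E C
    (fun s => size s = size E /\ output_config E s /\
              (exists x, C x /\ ens_eval E x = g E s) /\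
              (forall x, C x -> ens_eval E x <= g E s))
    (Running open).
Proof.
elim: n open => [|n IH] open //= hmu hinv.
have ne : open != [::].
  have [x Cx] := hC; have [s so _] := hinv.2 x Cx; by case: open so {hmu hinv}.
have [s so smax] := argmax_seq (f E) ne.
apply: ar_run.
  have [hsz _] := hinv.1 s so.
  move: hsz; rewrite leq_eqVlt => /orP [/eqP e|lt].
    by exists (Done s); apply: step_return.
  by eexists; apply: step_expand lt.
move=> c st; inversion st as [o s0 H1 H2 H3|o s0 H1 H2 H3]; subst.
- have [_ [hv [x [hb Cx]]]] := hinv.1 s0 H1.
  apply: ar_done.
  have fg : f E s0 = g E s0 by rewrite /f /h H3 big_geq // addr0.
  split=> //; split; first by split=> //; split=> //; exists x.
  split.
    exists x; split=> //.
    by rewrite (ens_split _ hb) ?H3 // big_geq // addr0.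
  move=> y Cy; have [s' so' hb'] := hinv.2 y Cy; have [hs' _] := hinv.1 s' so'.
  by rewrite -fg; apply: le_trans (ens_le_f hs' hb') (H2 s' so').
- apply: IH; last exact: inv_step.
  exact: leq_trans (mu_dec C H1 H3) hmu.
Qed.

Theorem theorem2 (R : realType) (d : nat) (E : seq (dtree R d))
    (C : input R d -> bool) (hC : exists x, C x) :
  always_returns E C
    (fun s => size s = size E /\ output_config E s /\
              (exists x, C x /\ ens_eval E x = g E s) /\
              (forall x, C x -> ens_eval E x <= g E s))
    (Running [:: [::]]).
Proof.
apply: (@main_lemma _ _ _ _ hC (mu E [:: [::]]).+1) => //.
split.
  move=> s; rewrite inE => /eqP ->; split=> //; split=> //.
  by have [x Cx] := hC; exists x; split.
by move=> x Cx; exists [::] => //; rewrite inE.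
Qed.
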